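(* Suppose the collective choice problem $\mathcal C$ satisfies Generic Finite Alternatives. For every $x^0\in X$ and integers $T'>T\ge 1$, \[U_{T'}(x^0)\ge U_T(x^0)\ge U_\infty(x^0).\] Moreover, exactly one of the following holds: (a) there exists $x^0\in X$ such that $U_T(x^0)>U_1(x^0)>U_\infty(x^0)$ for all $T\ge 2$; (b) for all $x^0\in X$ and all $T\ge 2$, $U_T(x^0)=U_1(x^0)=U_\infty(x^0)$.
   Context: Voters $N=\{1,\dots,n\}$ ($n$ odd) and a non-voting agenda setter $A$ choose from a finite policy space $X$; all players have strict (antisymmetric) complete transitive preferences $\succsim_i$ with utilities $u_i$ (Generic Finite Alternatives). $x\succ_M y$: a strict majority of voters strictly prefer $x$ to $y$. $M(x)=\{y: y\succ_M x\text{ or } y=x\}$; $\{\phi(x)\}=\arg\max_{y\in M(x)}u_A(y)$. In the amendment procedure with $T$ rounds (each round the agenda setter proposes a policy voted against the current default by simple majority; passed proposals become the default; the final default is implemented; equilibrium = subgame perfect with as-if-pivotal voting) the implemented policy is unique, equal to $\phi^T(x^0)$, and $U_T(x^0)=u_A(\phi^T(x^0))$ is the agenda setter's equilibrium payoff. A set $Y\subseteq X$ is stable if no distinct $x,y\in Y$ satisfy $y\succ_M x$ and $y\succ_A x$, and every $x\notin Y$ has some $y\in Y$ with $y\succ_M x$ and $y\succ_A x$; in this setting there is a unique stable set $V$. Let $\{\psi(x;V)\}=\arg\max_{y\in M(x)\cap V}u_A(y)$ and $U_\infty(x^0)=u_A(\psi(x^0;V))$; this is the agenda setter's payoff in the infinite-horizon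 game (no deadline; bargaining ends when the agenda setter proposes the current default or a proposal is rejected; the policy at termination is implemented; non-termination is worst for all; solution concept: pure-strategy Markov perfect equilibrium with as-if-pivotal voting). *)

(* Defs.v *)
From HB Require Import structures.
From mathcomp Require Import all_boot all_order all_algebra.
Set Implicit Arguments. Unset Strict Implicit. Unset Printing Implicit Defensive.
Import Order.TTheory GRing.Theory Num.Theory.
Local Open Scope ring_scope.

Section Amendment.
Variables (R : realDomainType) (X : finType) (n : nat).
Variables (u : 'I_n -> X -> R) (uA : X -> R).

Definition majpref (y x : X) : bool :=
  (n < (#|[set i : 'I_n | (u i x < u i y)%R]|).*2)%N.

Definition Mset (x : X) : {set X} := [set y | majpref y x || (y == x)].

Definition phi (x : X) : X := [arg max_(y > x in Mset x) uA y]%O.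

Definition U (T : nat) (x0 : X) : R := uA (iter T phi x0).

Definition dominates (y x : X) : bool := majpref y x && (uA x < uA y).

Definition stable (V : {set X}) : Prop :=
  (forall x y, x \in V -> y \in V -> x != y -> ~~ dominates y x) /\
  (forall x, x \notin V -> exists2 y, y \in V & dominates y x).

(* psi(x;V) = argmax_{y in M(x) \cap V} u_A(y) (the set is nonempty when V
   is stable; the fallback x is never used then) *)
Definition psi (V : {set X}) (x : X) : X :=
  match [pick y in Mset x :&: V] with
  | Some y0 => [arg max_(y > y0 in Mset x :&: V) uA y]%O
  | None => x
  end.

Definition Uinf (V : {set X}) (x0 : X) : R := uA (psi V x0).

End Amendment.

(* Generic Finite Alternatives: n odd, strict (injective-utility) preferences *)
Definition GFA (R : realDomainType) (X : finType) (n : nat)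
  (u : 'I_n -> X -> R) (uA : X -> R) : Prop :=
  odd n /\ (forall i, injective (u i)) /\ injective uA.

(* Main.v *)
Require Import Defs.
From HB Require Import structures.
From mathcomp Require Import all_boot all_order all_algebra.
Import Order.TTheory GRing.Theory Num.Theory.
Local Open Scope ring_scope.

Section Proofs.
Variables (R : realDomainType) (X : finType) (n : nat).
Variables (u : 'I_n -> X -> R) (uA : X -> R) (V : {set X}).
Hypothesis injA : injective uA.

Lemma Mself x : x \in Mset u x.
Proof. by rewrite inE eqxx orbT. Qed.

Lemma phi_spec x : phi u uA x \in Mset u x /\
  forall y, y \in Mset u x -> uA y <= uA (phi u uA x).
Proof.
rewrite /phi; case: (arg_maxP uA (Mself x)).
move=> i Hi Hmax; split=> // y Hy; exact: Hmax.
Qed.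

Lemma le_phi x : uA x <= uA (phi u uA x).
Proof. by case: (phi_spec x) => _ H; apply: H; apply: Mself. Qed.

Lemma phi_dom x : phi u uA x != x -> dominates u uA (phi u uA x) x.
Proof.
move=> Hne; case: (phi_spec x); rewrite inE => /orP [Hm|/eqP E] _; last by rewrite E eqxx in Hne.
rewrite /dominates Hm /= lt_neqAle le_phi andbT.
apply/negP => /eqP E; move: Hne; by rewrite -(injA _ _ E) eqxx.
Qed.

Lemma dom_phi w x : dominates u uA w x -> phi u uA x != x.
Proof.
case/andP=> Hm Hlt; apply/negP => /eqP E.
case: (phi_spec x) => _ H; have := H w; rewrite inE Hm /= E => /(_ isT).
by rewrite leNgt Hlt.
Qed.

Lemma iter_mono x T T' : (T <= T')%N ->
  uA (iter T (phi u uA) x) <= uA (iter T' (phi u uA) x).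
Proof.
elim: T' => [|T' IH]; first by rewrite leqn0 => /eqP ->.
rewrite leq_eqVlt => /orP [/eqP -> //|]; rewrite ltnS => /IH H.
apply: le_trans H _; rewrite iterS; exact: le_phi.
Qed.

Lemma psi_le x : uA (psi u uA V x) <= uA (phi u uA x).
Proof.
rewrite /psi; case: pickP => [y0 Hy0|_]; last exact: le_phi.
case: (arg_maxP uA Hy0) => i Hi _.
have Hi2 : i \in Mset u x :&: V by []. case: (phi_spec x) => _ H; apply: H; move: Hi2; rewrite in_setI; case/andP. done.
Qed.


Lemma psi_phi x : phi u uA x \in V -> psi u uA V x = phi u uA x.
Proof.
move=> HV; apply: injA; apply/eqP; rewrite eq_le psi_le /=.
have Hin : phi u uA x \in Mset u x :&: V by rewrite in_setI HV andbT; case: (phi_spec x).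
rewrite /psi; case: pickP => [y0 Hy0|H].
  case: (arg_maxP uA Hy0) => i Hi Hm.
  by apply: Hm.
by have := H (phi u uA x); rewrite Hin.
Qed.

Hypothesis stV : stable u uA V.

Lemma fix_inV x : phi u uA x = x -> x \in V.
Proof.
move=> E; apply/negPn/negP => Hx; case: stV => _ /(_ x Hx) [y _ Hd].
by move: (dom_phi _ _ Hd); rewrite E eqxx.
Qed.

Lemma psi_lt x : phi u uA x \notin V -> uA (psi u uA V x) < uA (phi u uA x).
Proof.
move=> HV; rewrite lt_neqAle psi_le andbT; apply/negP => /eqP E.
have E' := injA _ _ E; move: E'; rewrite /psi; case: pickP => [y0 Hy0|_ E'].
  case: (arg_maxP uA Hy0) => i Hi _ Ei.
  have Hi2 : i \in Mset u x :&: V by [].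
  by move: Hi2 HV; rewrite Ei in_setI => /andP[_ ->].
by move: HV; rewrite -{1}E' (fix_inV _ (esym E')).
Qed.

End Proofs.

Theorem theorem8 (R : realDomainType) (X : finType) (n : nat)
  (u : 'I_n -> X -> R) (uA : X -> R) (V : {set X}) :
  GFA u uA -> stable u uA V ->
  (forall (x0 : X) (T T' : nat), (1 <= T)%N -> (T < T')%N ->
     U u uA T x0 <= U u uA T' x0 /\ Uinf u uA V x0 <= U u uA T x0) /\
  (let A := exists x0 : X, forall T : nat, (2 <= T)%N ->
              U u uA 1 x0 < U u uA T x0 /\ Uinf u uA V x0 < U u uA 1 x0 in
   let B := forall (x0 : X) (T : nat), (2 <= T)%N ->
              U u uA T x0 = U u uA 1 x0 /\ U u uA 1 x0 = Uinf u uA V x0 in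
   (A /\ ~ B) \/ (~ A /\ B)).
Proof.
case=> _ [_ injA] stV; split.
  move=> x0 T T' H1 H2; rewrite /U; split.
    by apply: (@iter_mono _ _ _ u uA x0); exact: ltnW.
  apply: le_trans (@psi_le _ _ _ u uA V x0) _.
  exact: (@iter_mono _ _ _ u uA x0 1 T H1).
move=> A B.
have notAB : ~ (A /\ B).
  case=> [[x0 HA] HB]; case: (HA 2%N isT) => H _; case: (HB x0 2%N isT) => E _.
  by move: H; rewrite E ltxx.
case: (boolP [exists x, phi u uA x \notin V]) => [/existsP [x0 Hx0]|Hall].
  have HA : A.
    exists x0 => T HT; split; last by rewrite /Uinf /U /=; exact: (@psi_lt _ _ _ u uA V injA stV).
    apply: lt_le_trans (@iter_mono _ _ _ u uA x0 _ _ HT); rewrite /U /=.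
    rewrite lt_neqAle (@le_phi _ _ _ u uA) andbT; apply/negP => /eqP E.
    by move: Hx0; rewrite (@fix_inV _ _ _ u uA V stV _ (injA _ _ (esym E))).
  by left; split => // HB; apply: notAB.
have HallV : forall z, phi u uA z \in V.
  by move=> z; move/existsPn: Hall => /(_ z); rewrite negbK.
have VF : forall z, z \in V -> phi u uA z = z.
  move=> z Hz; apply/eqP/negPn/negP => Hne.
  have Hd := @phi_dom _ _ _ u uA injA z Hne.
  case: stV => /(_ z (phi u uA z) Hz (HallV z)) H _.
  have Hn : z != phi u uA z by rewrite eq_sym.
  by move: (H Hn); rewrite Hd.
have HB : B.
  move=> x0 T HT.
  split; last by rewrite /U /Uinf /= (@psi_phi _ _ _ u uA V injA _ (HallV x0)).
  have It : forall k, iter k.+1 (phi u uA) x0 = phi u uA x0.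
    elim=> [//|k IH]; by rewrite iterS IH VF.
  case: T HT => [//|T] _; by rewrite /U It.
by right; split => // HA; apply: notAB.
Qed.
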